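(* Consider the $\mathsf{HFOL}$ signatures: $\Delta$ with one nominal $k$, one flexible sort $Nat$ and flexible function symbols $0:\to Nat$, $succ:Nat\to Nat$; $\Delta^1$ with nominals $k,k_1$, one rigid sort $Nat$ and flexible function symbols $0:\to Nat$, $succ:Nat\to Nat$, $\_+\_:Nat\,Nat\to Nat$; $\Delta^2$ with nominals $k,k_2$, rigid sorts $Nat,List$ and flexible function symbols $0:\to Nat$, $succ:Nat\to Nat$, $nil:\to List$, $\_|\_:Nat\,List\to List$; $\Delta'$ with nominals $k,k_1,k_2$, rigid sorts $Nat,List$ and flexible function symbols $0$, $succ$, $\_+\_$, $nil$, and $\_|\_:Nat\,List\to List$. Let $\chi_1:\Delta\hookrightarrow\Delta^1$, $\chi_2:\Delta\hookrightarrow\Delta^2$, $\upsilon_1:\Delta^1\hookrightarrow\Delta'$, $\upsilon_2:\Delta^2\hookrightarrow\Delta'$ be the inclusions (this square is a pushout). Then this square is not a Craig Interpolation square.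
   Context: $\mathsf{HFOL}$ (hybrid first-order logic with rigid symbols): signatures $\Delta=(\Sigma^{\mathtt n},\Sigma^{\mathtt r}\subseteq\Sigma)$ with $\Sigma$ a many-sorted first-order signature, $\Sigma^{\mathtt r}$ its rigid part (interpreted identically in all worlds), $\Sigma^{\mathtt n}$ a single-sorted signature of nominals (constants) and modalities; signature morphisms are pairs of first-order signature morphisms mapping rigid symbols to rigid symbols. Kripke structures $(W,M)$: a $\Sigma^{\mathtt n}$-structure $W$ of worlds and $\Sigma$-structures $M_w$ agreeing on rigid symbols. Sentences are built from atoms (nominals, unary modalities, equations and relations between hybrid terms, where $@_k\sigma$ denotes $\sigma$ evaluated at world $W_k$) using $@_k$, $\neg$, finite $\vee$, store $\downarrow z$, existential (hence universal) quantification over nominal variables and variables of rigid sorts, and $\langle\lambda\rangle$; $(W,M)\models\varphi$ means $\varphi$ holds at every world; $\Phi\models\Psi$ is global consequence. A commutative square $\chi_1,\chi_2,\upsilon_1,\upsilon_2$ (with $\chi_i:\Delta\to\Delta^i$, $\upsilon_i:\Delta^i\to\Delta'$) is a Craig Interpolation (CI) square if for all $\Phi^1\subseteq\mathrm{Sen}(\Delta^1)$, $\Phi^2\subseteq\mathrm{Sen}(\Delta^2)$ with $\upsilon_1(\Phi^1)\models\upsilon_2(\Phi^2)$ there is $\Phi\subseteq\mathrm{Sen}(\Delta)$ with $\Phi^1\models\chi_1(\Phi)$ and $\chi_2(\Phi)\models\Phi^2$. *)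

(* Defs.v *)
(* A concrete rendering of HFOL (hybrid first-order logic with
   rigid symbols) for signatures built from the fixed symbol universe used in
   the statement (nominals k,k1,k2; sorts Nat,List; function symbols
   0, succ, +, nil, _|_), with no relation symbols and no modalities. *)
From Stdlib Require Import List Bool PeanoNat.
Import ListNotations.

Inductive nom : Type := k | k1 | k2.
Inductive sort : Type := Nat | List.
Inductive fsym : Type := zero | succ | plus | nil | cons.

Definition sort_eq_dec (s t : sort) : {s = t} + {s <> t}.
Proof. decide equality. Defined.

(* Function symbols have the fixed profiles
   0 : -> Nat, succ : Nat -> Nat, + : Nat Nat -> Nat, nil : -> List,
   _|_ : Nat List -> List; all function symbols are flexible. *)
Record sig : Type := Sig {
  nomP : nom -> bool;
  sortP : sort -> bool;
  rigS : sort -> bool;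
  funP : fsym -> bool }.

Inductive nterm : Type := NNom (i : nom) | NVar (z : nat).

(* hybrid terms; the optional nominal [a = Some j] turns the function
   symbol sigma into the rigidified symbol @_j sigma *)
Inductive term : sort -> Type :=
| tvar (s : sort) (x : nat) : term s
| tzero (a : option nterm) : term Nat
| tsucc (a : option nterm) : term Nat -> term Nat
| tplus (a : option nterm) : term Nat -> term Nat -> term Nat
| tnil (a : option nterm) : term List
| tcons (a : option nterm) : term Nat -> term List -> term List.

Inductive sen : Type :=
| SNom (j : nterm)
| SEq (s : sort) (t1 t2 : term s)
| SAt (j : nterm) (phi : sen)
| SNeg (phi : sen)
| SFalse
| SOr (phi psi : sen)
| SStore (z : nat) (phi : sen)
| SExN (z : nat) (phi : sen)
| SEx (s : sort) (x : nat) (phi : sen).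

Definition wf_nterm (D : sig) (bn : list nat) (j : nterm) : Prop :=
  match j with NNom i => nomP D i = true | NVar z => In z bn end.

Definition wf_at (D : sig) (bn : list nat) (a : option nterm) (ss : list sort) : Prop :=
  match a with
  | None => True
  | Some j => wf_nterm D bn j /\ Forall (fun s => rigS D s = true) ss
  end.

Fixpoint wf_term (D : sig) (bn : list nat) (bv : list (sort * nat)) {s : sort}
  (t : term s) : Prop :=
  match t with
  | tvar s x => In (s, x) bv
  | tzero a => funP D zero = true /\ wf_at D bn a [Nat]
  | tsucc a t1 => funP D succ = true /\ wf_at D bn a [Nat] /\ wf_term D bn bv t1
  | tplus a t1 t2 => funP D plus = true /\ wf_at D bn a [Nat] /\
                     wf_term D bn bv t1 /\ wf_term D bn bv t2
  | tnil a => funP D nil = true /\ wf_at D bn a [List]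
  | tcons a t1 t2 => funP D cons = true /\ wf_at D bn a [Nat; List] /\
                     wf_term D bn bv t1 /\ wf_term D bn bv t2
  end.

Fixpoint wf_sen (D : sig) (bn : list nat) (bv : list (sort * nat)) (phi : sen) : Prop :=
  match phi with
  | SNom j => wf_nterm D bn j
  | SEq s t1 t2 => sortP D s = true /\ wf_term D bn bv t1 /\ wf_term D bn bv t2
  | SAt j p => wf_nterm D bn j /\ wf_sen D bn bv p
  | SNeg p => wf_sen D bn bv p
  | SFalse => True
  | SOr p q => wf_sen D bn bv p /\ wf_sen D bn bv q
  | SStore z p => wf_sen D (z :: bn) bv p
  | SExN z p => wf_sen D (z :: bn) bv p
  | SEx s x p => sortP D s = true /\ rigS D s = true /\ wf_sen D bn ((s, x) :: bv) p
  end.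

Definition Sen (D : sig) (phi : sen) : Prop := wf_sen D [] [] phi.

Definition carT (rig : sort -> bool) (W : Type) (rc : sort -> Type)
  (fc : W -> sort -> Type) (w : W) (s : sort) : Type :=
  if rig s then rc s else fc w s.

(* Kripke structures whose rigid sorts (according to [rig]) have a single
   carrier shared by all worlds; flexible sorts have per-world carriers.
   All symbols of the universe are interpreted (symbols absent from a
   signature are simply ignored by its sentences). *)
Record kripke (rig : sort -> bool) : Type := Kripke {
  W : Type;
  nomI : nom -> W;
  rcar : sort -> Type;
  fcar : W -> sort -> Type;
  zeroI : forall w, carT rig W rcar fcar w Nat;
  succI : forall w, carT rig W rcar fcar w Nat -> carT rig W rcar fcar w Nat;
  plusI : forall w, carT rig W rcar fcar w Nat -> carT rig W rcar fcar w Nat ->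
                    carT rig W rcar fcar w Nat;
  nilI : forall w, carT rig W rcar fcar w List;
  consI : forall w, carT rig W rcar fcar w Nat -> carT rig W rcar fcar w List ->
                    carT rig W rcar fcar w List }.

Arguments W {rig}. Arguments nomI {rig}. Arguments rcar {rig}. Arguments fcar {rig}.
Arguments zeroI {rig}. Arguments succI {rig}. Arguments plusI {rig}.
Arguments nilI {rig}. Arguments consI {rig}.

Section Semantics.
Variable rig : sort -> bool.
Variable M : kripke rig.

Definition car (w : W M) (s : sort) : Type := carT rig (W M) (rcar M) (fcar M) w s.

Definition dflt (w : W M) (s : sort) : car w s :=
  match s as s0 return car w s0 with Nat => zeroI M w | List => nilI M w end.

(* move a value of a rigid sort between worlds (identity, since the carrier
   is shared); the default branch is only reached on ill-formed input *)
Definition move (w w' : W M) (s : sort) (x : car w s) : car w' s :=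
  (match rig s as b return
     ((if b then rcar M s else fcar M w s) ->
      (if b then rcar M s else fcar M w' s) ->
      (if b then rcar M s else fcar M w' s)) with
   | true => fun x _ => x
   | false => fun _ d => d
   end) x (dflt w' s).

Definition ofR (w : W M) (s : sort) (a : rcar M s) : car w s :=
  (match rig s as b return
     (rcar M s -> (if b then rcar M s else fcar M w s) ->
      (if b then rcar M s else fcar M w s)) with
   | true => fun a _ => a
   | false => fun _ d => d
   end) a (dflt w s).

Definition nval := nat -> W M.
Definition vval := forall s : sort, nat -> option (rcar M s).

Definition updN (rn : nval) (z : nat) (v : W M) : nval :=
  fun n => if Nat.eqb n z then v else rn n.

Definition updV (rv : vval) (s : sort) (x : nat) (a : rcar M s) : vval :=
  fun s' n =>
    match sort_eq_dec s s' with
    | left e => if Nat.eqb n x then Some (eq_rect s (rcar M) a s' e) else rv s' n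
    | right _ => rv s' n
    end.

Definition evalN (rn : nval) (j : nterm) : W M :=
  match j with NNom i => nomI M i | NVar z => rn z end.

Definition wat (rn : nval) (w : W M) (a : option nterm) : W M :=
  match a with None => w | Some j => evalN rn j end.

Fixpoint evalT (rn : nval) (rv : vval) (w : W M) {s : sort} (t : term s) : car w s :=
  match t in term s0 return car w s0 with
  | tvar s x => match rv s x with Some a => ofR w s a | None => dflt w s end
  | tzero a => move (wat rn w a) w Nat (zeroI M (wat rn w a))
  | tsucc a t1 =>
      move (wat rn w a) w Nat
        (succI M (wat rn w a) (move w (wat rn w a) Nat (evalT rn rv w t1)))
  | tplus a t1 t2 =>
      move (wat rn w a) w Nat
        (plusI M (wat rn w a) (move w (wat rn w a) Nat (evalT rn rv w t1))
                              (move w (wat rn w a) Nat (evalT rn rv w t2)))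
  | tnil a => move (wat rn w a) w List (nilI M (wat rn w a))
  | tcons a t1 t2 =>
      move (wat rn w a) w List
        (consI M (wat rn w a) (move w (wat rn w a) Nat (evalT rn rv w t1))
                              (move w (wat rn w a) List (evalT rn rv w t2)))
  end.

Fixpoint satL (rn : nval) (rv : vval) (w : W M) (phi : sen) : Prop :=
  match phi with
  | SNom j => w = evalN rn j
  | SEq s t1 t2 => evalT rn rv w t1 = evalT rn rv w t2
  | SAt j p => satL rn rv (evalN rn j) p
  | SNeg p => ~ satL rn rv w p
  | SFalse => False
  | SOr p q => satL rn rv w p \/ satL rn rv w q
  | SStore z p => satL (updN rn z w) rv w p
  | SExN z p => exists v : W M, satL (updN rn z v) rv w p
  | SEx s x p => rig s = true /\ exists a : rcar M s, satL rn (updV rv s x a) w p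
  end.

Definition sat (phi : sen) : Prop :=
  forall w : W M, satL (fun _ => nomI M k) (fun _ _ => None) w phi.

End Semantics.

Definition gcons (D : sig) (Phi Psi : sen -> Prop) : Prop :=
  forall M : kripke (rigS D),
    (forall phi, Phi phi -> sat (rigS D) M phi) -> forall psi, Psi psi -> sat (rigS D) M psi.

(* A commutative square of signature INCLUSIONS D -> D1, D2 -> D' (sentence
   translation along inclusions is the identity on raw syntax) is a Craig
   Interpolation square. *)
Definition CI_square (D D1 D2 D' : sig) : Prop :=
  forall Phi1 Phi2 : sen -> Prop,
    (forall phi, Phi1 phi -> Sen D1 phi) ->
    (forall phi, Phi2 phi -> Sen D2 phi) ->
    gcons D' Phi1 Phi2 ->
    exists Phi : sen -> Prop,
      (forall phi, Phi phi -> Sen D phi) /\ gcons D1 Phi1 Phi /\ gcons D2 Phi Phi2.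

Definition incl (D D' : sig) : Prop :=
  (forall i, nomP D i = true -> nomP D' i = true) /\
  (forall s, sortP D s = true -> sortP D' s = true) /\
  (forall s, sortP D s = true -> rigS D s = true -> rigS D' s = true) /\
  (forall f, funP D f = true -> funP D' f = true).

Definition Delta : sig := {|
  nomP := fun i => match i with k => true | _ => false end;
  sortP := fun s => match s with Nat => true | List => false end;
  rigS := fun _ => false;
  funP := fun f => match f with zero | succ => true | _ => false end |}.

Definition Delta1 : sig := {|
  nomP := fun i => match i with k | k1 => true | k2 => false end;
  sortP := fun s => match s with Nat => true | List => false end;
  rigS := fun _ => true;
  funP := fun f => match f with zero | succ | plus => true | _ => false end |}.

Definition Delta2 : sig := {|
  nomP := fun i => match i with k | k2 => true | k1 => false end;
  sortP := fun _ => true;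
  rigS := fun _ => true;
  funP := fun f => match f with plus => false | _ => true end |}.

Definition Delta' : sig := {|
  nomP := fun _ => true;
  sortP := fun _ => true;
  rigS := fun _ => true;
  funP := fun _ => true |}.

(* Main.v *)
Require Import Defs.
From Stdlib Require Import List Bool PeanoNat.
Import ListNotations.

Definition M1 : kripke (fun _ => true) :=
  @Kripke (fun _ => true) unit (fun _ => tt) (fun _ => unit) (fun _ _ => unit)
    (fun _ => tt) (fun _ x => x) (fun _ x _ => x) (fun _ => tt) (fun _ _ l => l).

Definition rc2 (s : sort) : Type := match s with Nat => bool | List => unit end.

Definition M2 : kripke (fun _ => true) :=
  @Kripke (fun _ => true) unit (fun _ => tt) rc2 (fun _ _ => unit)
    (fun _ => false) (fun _ x => x) (fun _ x _ => x) (fun _ => tt) (fun _ _ l => l).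

Definition P2 (s : sort) : rc2 s -> Prop :=
  match s as s0 return rc2 s0 -> Prop with Nat => fun v => v = false | List => fun _ => False end.

Lemma evalT_M2 : forall s (t : term s) bn rn rv w,
  wf_term Delta bn [] t -> P2 s (evalT (fun _ => true) M2 rn rv w t).
Proof.
  induction t; intros bn rn rv w H; simpl in H.
  - destruct H.
  - destruct H as [_ Ha]. destruct a as [j|]; [destruct Ha as [_ Hf]; inversion Hf; discriminate|].
    reflexivity.
  - destruct H as [_ [Ha Ht]]. destruct a as [j|]; [destruct Ha as [_ Hf]; inversion Hf; discriminate|].
    simpl. apply (IHt bn rn rv w Ht).
  - destruct H as [H _]; discriminate.
  - destruct H as [H _]; discriminate.
  - destruct H as [H _]; discriminate.
Qed.

Lemma transfer : forall phi bn, wf_sen Delta bn [] phi ->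
  forall rn1 rv1 w1 rn2 rv2 w2,
  satL (fun _ => true) M1 rn1 rv1 w1 phi <-> satL (fun _ => true) M2 rn2 rv2 w2 phi.
Proof.
  induction phi; intros bn H rn1 rv1 w1 rn2 rv2 w2; simpl in H |- *.
  - destruct w1, w2, (evalN _ M1 rn1 j), (evalN _ M2 rn2 j). tauto.
  - destruct H as [Hs [H1 H2]]. destruct s; [|discriminate].
    pose proof (evalT_M2 Nat t1 bn rn2 rv2 w2 H1) as E1.
    pose proof (evalT_M2 Nat t2 bn rn2 rv2 w2 H2) as E2.
    simpl in E1, E2. cbn. rewrite E1, E2.
    destruct (evalT (fun _ => true) M1 rn1 rv1 w1 t1), (evalT (fun _ => true) M1 rn1 rv1 w1 t2).
    tauto.
  - destruct H as [_ H]. apply (IHphi bn H).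
  - destruct (IHphi bn H rn1 rv1 w1 rn2 rv2 w2). tauto.
  - tauto.
  - destruct H as [Ha Hb].
    destruct (IHphi1 bn Ha rn1 rv1 w1 rn2 rv2 w2), (IHphi2 bn Hb rn1 rv1 w1 rn2 rv2 w2). tauto.
  - apply (IHphi (z :: bn) H).
  - split; intros [v Hv]; exists tt.
    + exact (proj1 (IHphi (z :: bn) H _ rv1 w1 (updN _ M2 rn2 z tt) rv2 w2) Hv).
    + exact (proj2 (IHphi (z :: bn) H (updN _ M1 rn1 z tt) rv1 w1 _ rv2 w2) Hv).
  - destruct H as [_ [Hr _]]. discriminate Hr.
Qed.

Definition phi0 : sen :=
  SNeg (SEx Nat 0 (SEx Nat 1 (SNeg (SEq Nat (tvar Nat 0) (tvar Nat 1))))).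

Theorem lemma5p16 : ~ CI_square Delta Delta1 Delta2 Delta'.
Proof.
  intro HCI.
  destruct (HCI (fun phi => phi = phi0) (fun phi => phi = phi0)) as [Phi [HS [H1 H2]]].
  - intros phi ->. cbn. repeat split; auto; right; left; reflexivity.
  - intros phi ->. cbn. repeat split; auto; right; left; reflexivity.
  - intros M HM psi ->. apply HM. reflexivity.
  - assert (S1 : sat (fun _ => true) M1 phi0).
    { intros w. cbn. intros [_ [a [_ [b Hb]]]]. apply Hb. destruct a, b. reflexivity. }
    assert (S2 : forall phi, Phi phi -> sat (fun _ => true) M2 phi).
    { intros phi Hp w. pose proof (H1 M1 (fun p Hp' => ltac:(rewrite Hp'; exact S1)) phi Hp tt) as X.
      apply (proj1 (transfer phi [] (HS phi Hp) _ _ _ _ _ _) X). }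
    pose proof (H2 M2 S2 phi0 eq_refl tt) as X.
    apply X. split; [reflexivity|]. exists true. split; [reflexivity|]. exists false.
    cbn. discriminate.
Qed.
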